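(* Let $u$ be a vertex of an oriented graph $D$. (a) If $u$ is not a weak king, then $D$ contains a vertex $v$ such that $v(1\text{-}0)u$, $v$ is not a weak serf, and the arc $vu$ lies in no intransitive triple of $D$. (b) If $u$ is not a weak serf, then $D$ contains a vertex $w$ such that $u(1\text{-}0)w$, $w$ is not a weak king, and the arc $uw$ lies in no intransitive triple of $D$.
   Context: An oriented graph is a digraph with no loops and no pair of symmetric arcs. For vertices $u,v$ write $u(1\text{-}0)v$ if there is an arc from $u$ to $v$, and $u(0\text{-}0)v$ if there is no arc between $u$ and $v$. A vertex $v$ is weakly reachable within two steps from $u$ if $u(1\text{-}0)v$, or $u(0\text{-}0)v$, or for some vertex $w$ one has $u(1\text{-}0)w(1\text{-}0)v$, or $u(1\text{-}0)w(0\text{-}0)v$, or $u(0\text{-}0)w(1\text{-}0)v$. A vertex $u$ is a weak king if every other vertex is weakly reachable within two steps from $u$, and a weak serf if $u$ is weakly reachable within two steps from every other vertex. A triple is the induced oriented subgraph on three distinct vertices; it is intransitive if it is a directed 3-cycle $x(1\text{-}0)y(1\text{-}0)z(1\text{-}0)x$, or a directed path $x(1\text{-}0)y(1\text{-}0)z$ with $x(0\text{-}0)z$; all other triples are transitive. *)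

(* Defs.v *)
From mathcomp Require Import all_boot.
Set Implicit Arguments. Unset Strict Implicit. Unset Printing Implicit Defensive.

Definition oriented (V : finType) (e : rel V) : Prop :=
  (forall u, ~~ e u u) /\ (forall u v, e u v -> ~~ e v u).

Definition no_arc (V : finType) (e : rel V) (u v : V) : Prop :=
  u <> v /\ ~~ e u v /\ ~~ e v u.

Definition weakly_reach2 (V : finType) (e : rel V) (u v : V) : Prop :=
  e u v \/ no_arc e u v \/
  exists w : V,
    (e u w /\ e w v) \/ (e u w /\ no_arc e w v) \/ (no_arc e u w /\ e w v).

Definition weak_king (V : finType) (e : rel V) (u : V) : Prop :=
  forall v : V, v <> u -> weakly_reach2 e u v.

Definition weak_serf (V : finType) (e : rel V) (u : V) : Prop :=
  forall v : V, v <> u -> weakly_reach2 e v u.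

Definition intrans_pat (V : finType) (e : rel V) (x y z : V) : Prop :=
  (e x y /\ e y z /\ e z x) \/ (e x y /\ e y z /\ no_arc e x z).

Definition intransitive (V : finType) (e : rel V) (a b c : V) : Prop :=
  [/\ a <> b, b <> c & a <> c] /\
  (intrans_pat e a b c \/ intrans_pat e a c b \/ intrans_pat e b a c \/
   intrans_pat e b c a \/ intrans_pat e c a b \/ intrans_pat e c b a).

Definition arc_in_no_intrans (V : finType) (e : rel V) (a b : V) : Prop :=
  forall c : V, c <> a -> c <> b -> ~ intransitive e a b c.

(* Main.v *)
Require Import Defs.
From mathcomp Require Import all_boot.
From Stdlib Require Import Classical.

Lemma no_arc_sym (V : finType) (e : rel V) a b : no_arc e a b -> no_arc e b a.
Proof. by case=> [h [h1 h2]]; split; [move=> E; apply: h; rewrite E|split]. Qed.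

Ltac fin e asym N1 N2 N3 c :=
  repeat match goal with
  | H : _ /\ _ |- _ => destruct H
  | H : _ \/ _ |- _ => destruct H
  end;
  first
  [ match goal with h1 : is_true (e ?a ?b), h2 : is_true (e ?b ?a) |- _ =>
      move: (asym _ _ h1); rewrite h2; done end
  | match goal with h1 : is_true (e ?a ?b), h2 : no_arc e ?a ?b |- _ =>
      case: h2 => _ [h2 _]; rewrite h1 in h2; done end
  | match goal with h1 : is_true (e ?a ?b), h2 : no_arc e ?b ?a |- _ =>
      case: h2 => _ [_ h2]; rewrite h1 in h2; done end
  | match goal with h1 : ~ ?P, h2 : ?P |- _ => exact: (h1 h2) end
  | apply: (N1 c); split; assumption
  | apply: (N2 c); split; [assumption | apply: no_arc_sym; assumption]
  | apply: (N2 c); split; [assumption | assumption]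
  | apply: (N3 c); split; [apply: no_arc_sym; assumption | assumption]
  | apply: (N3 c); split; [assumption | assumption] ].

Theorem lemma1 (V : finType) (e : rel V) (u : V) :
  oriented e ->
  (~ weak_king e u ->
     exists v : V, e v u /\ ~ weak_serf e v /\ arc_in_no_intrans e v u) /\
  (~ weak_serf e u ->
     exists w : V, e u w /\ ~ weak_king e w /\ arc_in_no_intrans e u w).
Proof.
move=> [irr asym]; split.
- move=> nk; have [x Hx] := not_all_ex_not _ _ nk.
  have [xu nr] := imply_to_and _ _ Hx.
  have N0 : ~ e u x by move=> h; apply: nr; left.
  have N1 : forall w, ~ (e u w /\ e w x) by move=> w h; apply: nr; right; right; exists w; left.
  have N2 : forall w, ~ (e u w /\ no_arc e w x) by move=> w h; apply: nr; right; right; exists w; right; left.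
  have N3 : forall w, ~ (no_arc e u w /\ e w x) by move=> w h; apply: nr; right; right; exists w; right; right.
  have exu : e x u.
    case E: (e x u) => //; exfalso; apply: nr; right; left.
    split; [by move=> h; apply: xu; rewrite h|split; [by apply/negP|by rewrite E]].
  exists x; split => //; split.
    by move=> H; apply: nr; apply: H => h; apply: xu; rewrite h.
  move=> c cx cu [_ H]; rewrite /intrans_pat in H.
  fin e asym N1 N2 N3 c.
- move=> nk; have [x Hx] := not_all_ex_not _ _ nk.
  have [xu nr] := imply_to_and _ _ Hx.
  have N0 : ~ e x u by move=> h; apply: nr; left.
  have N1 : forall w, ~ (e x w /\ e w u) by move=> w h; apply: nr; right; right; exists w; left.
  have N2 : forall w, ~ (e x w /\ no_arc e w u) by move=> w h; apply: nr; right; right; exists w; right; left.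
  have N3 : forall w, ~ (no_arc e x w /\ e w u) by move=> w h; apply: nr; right; right; exists w; right; right.
  have exu : e u x.
    case E: (e u x) => //; exfalso; apply: nr; right; left.
    split; [by [] |split; [by apply/negP|by rewrite E]].
  exists x; split => //; split.
    by move=> H; apply: nr; apply: H => h; apply: xu; rewrite h.
  move=> c cx cu [_ H]; rewrite /intrans_pat in H.
  fin e asym N1 N2 N3 c.
Qed.
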